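(* Let $n\ge2$, $1\le r\le n-1$, $\alpha,\beta,\gamma\in\mathbb{Z}_2^{n-r}$, $\alpha',\beta',\gamma'\in\mathbb{Z}_2^{r}$, $\omega=\omega(\alpha,\beta,\gamma)$ and $\omega'=\omega(\alpha',\beta',\gamma')$. Then $\mathrm{adp}^{\mathrm{XR}}_r(\alpha'\|\alpha,\ \beta'\|\beta\to\gamma\|\gamma')=0$ if and only if for some $X\in\{1,\dots,7\}$ the word $\omega'$ satisfies the pattern $M_X$ and $\omega$ satisfies at least one pattern in the list $P_X$, where: $M_1=$ [.*d00*], $P_1$: [$\alpha_0$*], [$\beta_0$*], [0$\hat0$*], [0$\hat0$*1.*], [0$\hat0$*2$\alpha_0$*], [0$\hat0$*4$\beta_0$*], [0$\hat0$*7], [0$\hat0$*7$\gamma_1$*$1_7$], [1$\hat1$*], [1$\hat1$*0.*], [1$\hat1$*3$\alpha_0$*], [1$\hat1$*5$\beta_0$*], [1$\hat1$*6], [1$\hat1$*6$\gamma_0$*$0_6$]; $M_2=$ [.*e22*], $P_2$: [$\alpha_0$*], [2$\hat2$*], [2$\hat2$*3.*], [2$\hat2$*0$\alpha_0$*], [2$\hat2$*5$\gamma_1$*$1_7$], [3$\hat3$*], [3$\hat3$*2.*], [3$\hat3$*1$\alpha_0$*], [3$\hat3$*4$\gamma_0$*$0_6$]; $M_3=$ [.*e44*], $P_3$: [$\beta_0$*], [4$\hat4$*], [4$\hat4$*5.*], [4$\hat4$*0$\beta_0$*], [4$\hat4$*3$\gamma_1$*$1_7$], [5$\hat5$*], [5$\hat5$*4.*],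 [5$\hat5$*1$\beta_0$*], [5$\hat5$*2$\gamma_0$*$0_6$]; $M_4=$ [.*d66*], $P_4$: [6$\hat6$*7.*], [6$\hat6$*1$\gamma_1$*$1_7$], [7$\hat7$*6.*], [7$\hat7$*0$\gamma_0$*$0_6$]; $M_5=$ [.*d], $P_5$: [0*], [1*]; $M_6=$ [.*], $P_6$: [.*d00*], [.*e11*]; $M_7=$ [$\gamma_0$*], $P_7$: [.*d].
   Context: For $x\in\mathbb{Z}_2^m$ write $x=(x_0,\dots,x_{m-1})$, identified with the integer $\sum_i x_i2^{m-1-i}$ ($x_0$ most significant); arithmetic on $\mathbb{Z}_2^n$ is modulo $2^n$. $\oplus$ is bitwise XOR, $x\lll r=(x_r,\dots,x_{n-1},x_0,\dots,x_{r-1})$, and $\alpha\|\beta=(\alpha_0,\dots,\alpha_{m-1},\beta_0,\dots,\beta_{k-1})$ is concatenation. For $f:(\mathbb{Z}_2^n)^2\to\mathbb{Z}_2^n$, $\mathrm{adp}^f(\alpha,\beta\to\gamma)=4^{-n}\#\{(x,y): f(x+\alpha,y+\beta)=f(x,y)+\gamma\}$; $\mathrm{adp}^{\mathrm{XR}}_r$ is this for $f(x,y)=(x\oplus y)\lll r$. For $\alpha,\beta,\gamma\in\mathbb{Z}_2^m$ the octal word $\omega(\alpha,\beta,\gamma)\in\{0,\dots,7\}^m$ has symbols $\omega_i=4\alpha_i+2\beta_i+\gamma_i$; symbols are also viewed as elements of $\mathbb{Z}_2^3$ so $\oplus$ applies to them. Patterns: a pattern is written between [ (most significant end) and ] (least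 significant end), and a word satisfies it if the whole word, read from $\omega_0$ to $\omega_{m-1}$, matches it in the sense of regular expressions, where each pattern symbol matches one octal symbol as follows: a digit $t$ matches exactly $t$; '.' matches any symbol; e matches $0,3,5,6$; d matches $1,2,4,7$; $\hat t$ matches $t, t\oplus3, t\oplus5$; $\alpha_0$ matches $0,1,2,3$; $\alpha_1$ matches $4,5,6,7$; $\beta_0$ matches $0,1,4,5$; $\beta_1$ matches $2,3,6,7$; $\gamma_0$ matches $0,2,4,6$; $\gamma_1$ matches $1,3,5,7$; $0_6$ matches $0,6$; $1_7$ matches $1,7$; and s* (for a pattern symbol s) matches zero or more consecutive symbols each matched by s. *)

(* Defs.v *)
From mathcomp Require Import all_boot all_order all_algebra.
Set Implicit Arguments. Unset Strict Implicit. Unset Printing Implicit Defensive.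
Import GRing.Theory Num.Theory.

(* integer value  sum_i x_i 2^(m-1-i)  (x_0 most significant) *)
Definition bv_val (x : seq bool) : nat := foldl (fun acc (b : bool) => 2 * acc + b) 0 x.

Definition bv_of (n k : nat) : n.-tuple bool :=
  [tuple odd (k %/ 2 ^ (n.-1 - i)) | i < n].

(* reading a sequence as an n-bit vector (exact when size s = n) *)
Definition tup_of (n : nat) (s : seq bool) : n.-tuple bool :=
  [tuple nth false s i | i < n].

Definition bv_add (n : nat) (x y : n.-tuple bool) : n.-tuple bool :=
  bv_of n ((bv_val x + bv_val y) %% 2 ^ n).

Definition bv_xor (n : nat) (x y : n.-tuple bool) : n.-tuple bool :=
  [tuple (tnth x i) (+) (tnth y i) | i < n].

Definition bv_rotl (n r : nat) (x : n.-tuple bool) : n.-tuple bool :=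
  tup_of n (rot r x).

Definition adp (n : nat) (f : n.-tuple bool -> n.-tuple bool -> n.-tuple bool)
  (a b g : n.-tuple bool) : rat :=
  ((#|[pred p : n.-tuple bool * n.-tuple bool |
        f (bv_add p.1 a) (bv_add p.2 b) == bv_add (f p.1 p.2) g]|)%:R
   / (4 ^ n)%:R)%R.

Definition XR (n r : nat) (x y : n.-tuple bool) : n.-tuple bool :=
  bv_rotl r (bv_xor x y).

Definition adpXR (n r : nat) (a b g : n.-tuple bool) : rat := adp (XR r) a b g.

Definition omega (a b c : seq bool) : seq nat :=
  [seq 4 * nat_of_bool p.1.1 + 2 * nat_of_bool p.1.2 + nat_of_bool p.2 | p : bool * bool * bool <- zip (zip a b) c].

Inductive pitem := Sy of pred nat | St of pred nat.
Definition pattern := seq pitem.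

(* whole-word regular-expression matching, read from omega_0 to omega_{m-1} *)
Fixpoint matchp (p : pattern) : seq nat -> bool :=
  match p with
  | [::] => fun w => nilp w
  | Sy c :: p' => fun w => if w is s :: w' then c s && matchp p' w' else false
  | St c :: p' => fix g w :=
      matchp p' w || (if w is s :: w' then c s && g w' else false)
  end.

Definition cdig (t : nat) : pred nat := fun s => s == t.
Definition cany : pred nat := fun _ => true.
Definition ce : pred nat := fun s => s \in [:: 0; 3; 5; 6].
Definition cd : pred nat := fun s => s \in [:: 1; 2; 4; 7].
Definition chat (t : nat) : pred nat :=
  fun s => (s == t) || (s == Nat.lxor t 3) || (s == Nat.lxor t 5).
Definition ca0 : pred nat := fun s => s \in [:: 0; 1; 2; 3].
Definition ca1 : pred nat := fun s => s \in [:: 4; 5; 6; 7].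
Definition cb0 : pred nat := fun s => s \in [:: 0; 1; 4; 5].
Definition cb1 : pred nat := fun s => s \in [:: 2; 3; 6; 7].
Definition cg0 : pred nat := fun s => s \in [:: 0; 2; 4; 6].
Definition cg1 : pred nat := fun s => s \in [:: 1; 3; 5; 7].
Definition c06 : pred nat := fun s => s \in [:: 0; 6].
Definition c17 : pred nat := fun s => s \in [:: 1; 7].

Definition D (t : nat) := Sy (cdig t).

Definition Mpat (X : nat) : pattern :=
  match X with
  | 1 => [:: St cany; Sy cd; D 0; St (cdig 0)]
  | 2 => [:: St cany; Sy ce; D 2; St (cdig 2)]
  | 3 => [:: St cany; Sy ce; D 4; St (cdig 4)]
  | 4 => [:: St cany; Sy cd; D 6; St (cdig 6)]
  | 5 => [:: St cany; Sy cd]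
  | 6 => [:: St cany]
  | 7 => [:: St cg0]
  | _ => [::]
  end.

Definition Ppats (X : nat) : seq pattern :=
  match X with
  | 1 => [:: [:: St ca0]; [:: St cb0];
            [:: D 0; St (chat 0)];
            [:: D 0; St (chat 0); D 1; St cany];
            [:: D 0; St (chat 0); D 2; St ca0];
            [:: D 0; St (chat 0); D 4; St cb0];
            [:: D 0; St (chat 0); D 7];
            [:: D 0; St (chat 0); D 7; St cg1; Sy c17];
            [:: D 1; St (chat 1)];
            [:: D 1; St (chat 1); D 0; St cany];
            [:: D 1; St (chat 1); D 3; St ca0];
            [:: D 1; St (chat 1); D 5; St cb0];
            [:: D 1; St (chat 1); D 6];
            [:: D 1; St (chat 1); D 6; St cg0; Sy c06]]
  | 2 => [:: [:: St ca0];
            [:: D 2; St (chat 2)];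
            [:: D 2; St (chat 2); D 3; St cany];
            [:: D 2; St (chat 2); D 0; St ca0];
            [:: D 2; St (chat 2); D 5; St cg1; Sy c17];
            [:: D 3; St (chat 3)];
            [:: D 3; St (chat 3); D 2; St cany];
            [:: D 3; St (chat 3); D 1; St ca0];
            [:: D 3; St (chat 3); D 4; St cg0; Sy c06]]
  | 3 => [:: [:: St cb0];
            [:: D 4; St (chat 4)];
            [:: D 4; St (chat 4); D 5; St cany];
            [:: D 4; St (chat 4); D 0; St cb0];
            [:: D 4; St (chat 4); D 3; St cg1; Sy c17];
            [:: D 5; St (chat 5)];
            [:: D 5; St (chat 5); D 4; St cany];
            [:: D 5; St (chat 5); D 1; St cb0];
            [:: D 5; St (chat 5); D 2; St cg0; Sy c06]]
  | 4 => [:: [:: D 6; St (chat 6); D 7; St cany];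
            [:: D 6; St (chat 6); D 1; St cg1; Sy c17];
            [:: D 7; St (chat 7); D 6; St cany];
            [:: D 7; St (chat 7); D 0; St cg0; Sy c06]]
  | 5 => [:: [:: St (cdig 0)]; [:: St (cdig 1)]]
  | 6 => [:: [:: St cany; Sy cd; D 0; St (cdig 0)];
            [:: St cany; Sy ce; D 1; St (cdig 1)]]
  | 7 => [:: [:: St cany; Sy cd]]
  | _ => [::]
  end.

(* Main.v *)
Require Import Defs.
From mathcomp Require Import all_boot all_order all_algebra.
From mathcomp Require Import zify.
Set Implicit Arguments. Unset Strict Implicit. Unset Printing Implicit Defensive.

Definition ba (s : nat) : bool := odd (s %/ 4).
Definition bb (s : nat) : bool := odd (s %/ 2).
Definition bc (s : nat) : bool := odd s.
Definition bools := [:: false; true].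

Definition stepb (s i m : nat) : bool :=
 has (fun x : bool => has (fun y : bool => has (fun X : bool => has (fun Y : bool =>
  [&& (x + ba s + ba i == X + 2 * ba m)%N, (y + bb s + bb i == Y + 2 * bb m)%N
    & ((x (+) y) + bc s + bc i == (X (+) Y) + 2 * bc m)%N]) bools) bools) bools) bools.

Definition stepT : seq (seq (seq bool)) :=
[:: [:: [:: true; false; false; false; false; false; false; false];
               [:: false; false; false; false; false; false; false; false];
               [:: false; false; false; false; false; false; false; false];
               [:: true; true; true; true; false; false; false; false];
               [:: false; false; false; false; false; false; false; false];
               [:: true; true; false; false; true; true; false; false];
               [:: true; false; true; false; true; false; true; false];
               [:: false; false; false; false; false; false; false; false]];
           [:: [:: false; false; false; false; false; false; false; false];
               [:: false; true; false; false; false; false; false; false];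
               [:: true; true; true; true; false; false; false; false];
               [:: false; false; false; false; false; false; false; false];
               [:: true; true; false; false; true; true; false; false];
               [:: false; false; false; false; false; false; false; false];
               [:: false; false; false; false; false; false; false; false];
               [:: false; true; false; true; false; true; false; true]];
           [:: [:: false; false; false; false; false; false; false; false];
               [:: true; true; true; true; false; false; false; false];
               [:: false; false; true; false; false; false; false; false];
               [:: false; false; false; false; false; false; false; false];
               [:: true; false; true; false; true; false; true; false];
               [:: false; false; false; false; false; false; false; false];
               [:: false; false; false; false; false; false; false; false];
               [:: false; false; true; true; false; false; true; true]];
           [:: [:: true; true; true; true; false; false; false; false];
               [:: false; false; false; false; false; false; false; false];
               [:: false; false; false; false; false; false; false; false];
               [:: false; false; false; true; false; false; false; false];
               [:: false; false; false; false; false; false; false; false];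
               [:: false; true; false; true; false; true; false; true];
               [:: false; false; true; true; false; false; true; true];
               [:: false; false; false; false; false; false; false; false]];
           [:: [:: false; false; false; false; false; false; false; false];
               [:: true; true; false; false; true; true; false; false];
               [:: true; false; true; false; true; false; true; false];
               [:: false; false; false; false; false; false; false; false];
               [:: false; false; false; false; true; false; false; false];
               [:: false; false; false; false; false; false; false; false];
               [:: false; false; false; false; false; false; false; false];
               [:: false; false; false; false; true; true; true; true]];
           [:: [:: true; true; false; false; true; true; false; false];
               [:: false; false; false; false; false; false; false; false];
               [:: false; false; false; false; false; false; false; false];
               [:: false; true; false; true; false; true; false; true];
               [:: false; false; false; false; false; false; false; false];
               [:: false; false; false; false; false; true; false; false];
               [:: false; false; false; false; true; true; true; true];
               [:: false; false; false; false; false; false; false; false]];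
           [:: [:: true; false; true; false; true; false; true; false];
               [:: false; false; false; false; false; false; false; false];
               [:: false; false; false; false; false; false; false; false];
               [:: false; false; true; true; false; false; true; true];
               [:: false; false; false; false; false; false; false; false];
               [:: false; false; false; false; true; true; true; true];
               [:: false; false; false; false; false; false; true; false];
               [:: false; false; false; false; false; false; false; false]];
           [:: [:: false; false; false; false; false; false; false; false];
               [:: false; true; false; true; false; true; false; true];
               [:: false; false; true; true; false; false; true; true];
               [:: false; false; false; false; false; false; false; false];
               [:: false; false; false; false; true; true; true; true];
               [:: false; false; false; false; false; false; false; false];
               [:: false; false; false; false; false; false; false; false];
               [:: false; false; false; false; false; false; false; true]]].
Definition stepL3 (s i m : nat) : bool := nth false (nth [::] (nth [::] stepT s) i) m.
Definition relinit (pr : nat -> nat) (np : nat) : seq (seq bool) :=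
  [seq [seq pr i == o | o <- iota 0 np] | i <- iota 0 8].
Definition relstep (np : nat) (v : seq (seq bool)) (s : nat) : seq (seq bool) :=
  [seq [seq has (fun m => stepL3 s i m && nth false (nth [::] v m) o) (iota 0 8) | o <- iota 0 np] | i <- iota 0 8].

Fixpoint dstep (q : pattern) (i s : nat) : seq nat :=
  match q with
  | [::] => [::]
  | Sy c :: _ => if c s then [:: i.+1] else [::]
  | St c :: q' => (if c s then [:: i] else [::]) ++ dstep q' i.+1 s
  end.
Definition pinit (p : pattern) : seq bool := mkseq (fun j => j == 0) (size p).+1.
Definition pstep (p : pattern) (v : seq bool) (s : nat) : seq bool :=
  let L := flatten [seq (if nth false v i then dstep (drop i p) i s else [::]) | i <- iota 0 (size p).+1] in
  mkseq (fun j => j \in L) (size p).+1.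
Definition isSt (it : pitem) : bool := if it is St _ then true else false.
Definition accept (p : pattern) (v : seq bool) : bool :=
  has (fun i => nth false v i && all isSt (drop i p)) (iota 0 (size p).+1).

Definition LT := (seq (seq bool) * seq (seq (seq bool)))%type.
Definition HT := (seq (seq bool) * seq (seq bool))%type.
Definition initL : LT := (relinit (fun o => o %/ 2) 4, [seq [seq pinit p | p <- Ppats X] | X <- iota 1 7]).
Definition stepL (st : LT) (s : nat) : LT :=
  (relstep 4 st.1 s, [seq [seq pstep pv.1 pv.2 s | pv <- zip (Ppats X.1) X.2] | X <- zip (iota 1 7) st.2]).
Definition initH : HT := (relinit (fun o => o %% 2) 2, [seq pinit (Mpat X) | X <- iota 1 7]).
Definition stepH (st : HT) (s : nat) : HT :=
  (relstep 2 st.1 s, [seq pstep (Mpat X.1) X.2 s | X <- zip (iota 1 7) st.2]).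

Inductive trie := TNone | TLeaf of nat | TNode of trie & trie.
Fixpoint tfind (t : trie) (key : seq bool) : option nat :=
  match key, t with
  | [::], TLeaf k => Some k
  | b :: key', TNode l r => tfind (if b then r else l) key'
  | _, _ => None
  end.
Fixpoint tins (t : trie) (key : seq bool) (k : nat) : trie :=
  match key with
  | [::] => TLeaf k
  | b :: key' =>
    match t with
    | TNode l r => if b then TNode l (tins r key' k) else TNode (tins l key' k) r
    | _ => if b then TNode TNone (tins TNone key' k) else TNode (tins TNone key' k) TNone
    end
  end.

Section Explore.
Variables (T : Type) (step : T -> nat -> T) (key : T -> seq bool).
Fixpoint bfs (fuel : nat) (todo : seq T) (t : trie) (cnt : nat) (acc : seq T) : seq T * trie :=
  match fuel with 0 => (rev acc, t) | f.+1 =>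
    match todo with [::] => (rev acc, t) | x :: todo' =>
      let: (new, t', cnt') := foldl (fun (st : seq T * trie * nat) s =>
          let: (nw, tr, c) := st in let y := step x s in
          if tfind tr (key y) is Some _ then st else (y :: nw, tins tr (key y) c, c.+1))
         ([::], t, cnt) (iota 0 8) in
      bfs f (todo' ++ rev new) t' cnt' (new ++ acc)
    end end.
Definition explore (init : T) : seq T * seq (seq nat) :=
  let: (R, t) := bfs 100000 [:: init] (tins TNone (key init) 0) 1 [:: init] in
  (R, [seq [seq (if tfind t (key (step x s)) is Some k then k else 0) | s <- iota 0 8] | x <- R]).
End Explore.

Definition checkDFA (T : eqType) (step : T -> nat -> T) (init : T) (RT : seq T * seq (seq nat)) : bool :=
  let R := RT.1 in let Tr := RT.2 in
  [&& size R > 0, nth init R 0 == init, size Tr == size R &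
   all (fun k => all (fun s => (nth 0 (nth [::] Tr k) s < size R) && (step (nth init R k) s == nth init R (nth 0 (nth [::] Tr k) s))) (iota 0 8)) (iota 0 (size R))].

Definition keyL (st : LT) : seq bool := flatten st.1 ++ flatten (flatten st.2).
Definition keyH (st : HT) : seq bool := flatten st.1 ++ flatten st.2.
Definition RLT := explore stepL keyL initL.
Definition RHT := explore stepH keyH initH.

Definition zerob (l : LT) (h : HT) : bool :=
  ~~ has (fun cx : bool => has (fun cy : bool => has (fun e : bool =>
       nth false (nth [::] l.1 e) (2 * cx + cy) && nth false (nth [::] h.1 (4 * cx + 2 * cy)) e) bools) bools) bools.
Definition rhsb (l : LT) (h : HT) : bool :=
  has (fun X => accept (Mpat X) (nth [::] h.2 X.-1) &&
                has (fun pv => accept pv.1 pv.2) (zip (Ppats X) (nth [::] l.2 X.-1))) (iota 1 7).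
Definition finalb (RL : seq LT) (RH : seq HT) := all (fun l => all (fun h => zerob l h == rhsb l h) RH) RL.

Lemma stepT_ok : all (fun s => all (fun i => all (fun m => stepL3 s i m == stepb s i m) (iota 0 8)) (iota 0 8)) (iota 0 8).
Proof. vm_compute. reflexivity. Qed.
Lemma RL_ok : checkDFA stepL initL RLT. Proof. vm_compute. reflexivity. Qed.
Lemma RH_ok : checkDFA stepH initH RHT. Proof. vm_compute. reflexivity. Qed.
Lemma final_ok : finalb RLT.1 RHT.1.
Proof. vm_compute. reflexivity. Qed.


Lemma matchp_nil p : matchp p [::] = all isSt p.
Proof. elim: p => [|it p IH]; first by []. case: it => c /=. by []. by rewrite IH orbF. Qed.

Lemma matchp_St c q w : matchp (St c :: q) w =
  matchp q w || (if w is s :: w' then c s && matchp (St c :: q) w' else false).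
Proof. by case: w. Qed.

Lemma dstep_match s w q i p : drop i p = q ->
  matchp q (s :: w) = has (fun j => matchp (drop j p) w) (dstep q i s).
Proof.
elim: q i => [|it q IH] i Hd; first by [].
have Hd' : drop i.+1 p = q by rewrite -add1n -drop_drop Hd /= drop0.
case: it Hd => c Hd.
- rewrite /=; case: (c s) => /=; last by []. by rewrite Hd' orbF.
- rewrite matchp_St /= has_cat (IH i.+1 Hd') orbC; case: (c s) => /=; last by [].
  by rewrite Hd orbF.
Qed.

Lemma dstep_bound q i s j : j \in dstep q i s -> i <= j <= i + size q.
Proof.
elim: q i => [|[c|c] q IH] i //=.
- by case: (c s) => //; rewrite inE => /eqP ->; lia.
- rewrite mem_cat => /orP [].
  + by case: (c s) => //; rewrite inE => /eqP ->; lia.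
  + move/IH => /andP [h1 h2]; lia.
Qed.

Definition Mst p v w := has (fun i => nth false v i && matchp (drop i p) w) (iota 0 (size p).+1).

Lemma Mst_step p v s w : Mst p v (s :: w) = Mst p (pstep p v s) w.
Proof.
rewrite /Mst /pstep; apply/hasP/hasP.
- move=> [i Hi /andP [Hv]]; rewrite (dstep_match s w (erefl (drop i p))).
  move/hasP => [j Hj Hm]; exists j.
  + move: (dstep_bound Hj) => /andP [_ h]; rewrite mem_iota add0n ltnS /=.
    move: Hi; rewrite mem_iota add0n ltnS /= => Hi.
    by rewrite size_drop subnKC in h.
  + rewrite nth_mkseq; last first.
      move: (dstep_bound Hj) => /andP [_ h]; move: Hi; rewrite mem_iota add0n ltnS /= => Hi.
      by rewrite size_drop subnKC in h.
    rewrite Hm andbT; apply/flattenP; exists (dstep (drop i p) i s) => //.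
    by apply/mapP; exists i => //; rewrite Hv.
- move=> [j Hj /andP [Hin Hm]]; move: Hj; rewrite mem_iota add0n /= => Hj.
  rewrite nth_mkseq // in Hin; move/flattenP: Hin => [L /mapP [i Hi ->] HjL].
  exists i => //; case: (nth false v i) HjL => // HjL /=.
  by rewrite (dstep_match s w (erefl (drop i p))); apply/hasP; exists j.
Qed.

Lemma Mst_accept p v w : Mst p v w = accept p (foldl (pstep p) v w).
Proof.
elim: w v => [|s w IH] v /=.
- by rewrite /Mst /accept; apply: eq_has => i; rewrite matchp_nil.
- by rewrite Mst_step IH.
Qed.

Lemma matchp_accept p w : matchp p w = accept p (foldl (pstep p) (pinit p) w).
Proof.
rewrite -Mst_accept /Mst /= drop0.
rewrite (@eq_in_has _ _ pred0) ?has_pred0 ?orbF //.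
move=> i; rewrite mem_iota => /andP [h1 h2]; rewrite /pinit nth_mkseq //.
by case: i h1 {h2}.
Qed.


Definition xorl (s t : seq bool) : seq bool := [seq p.1 (+) p.2 | p <- zip s t].

Definition Feas (a b c : seq bool) (i o : nat) : Prop :=
  exists x y X Y : seq bool,
   [/\ size x = size a, size y = size a, size X = size a, size Y = size a &
   [/\ bv_val x + bv_val a + ba i = bv_val X + ba o * 2 ^ size a,
       bv_val y + bv_val b + bb i = bv_val Y + bb o * 2 ^ size a &
       bv_val (xorl x y) + bv_val c + bc i = bv_val (xorl X Y) + bc o * 2 ^ size a]].

Definition FeasW (w : seq nat) (i o : nat) : Prop := Feas (map ba w) (map bb w) (map bc w) i o.

Lemma bv_val_rcons s (b : bool) : bv_val (rcons s b) = 2 * bv_val s + b.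
Proof. by rewrite /bv_val -cats1 foldl_cat. Qed.

Lemma xorl_rcons s t a b : size s = size t ->
  xorl (rcons s a) (rcons t b) = rcons (xorl s t) (a (+) b).
Proof. by move=> h; rewrite /xorl zip_rcons // map_rcons. Qed.

Lemma size_xorl s t : size s = size t -> size (xorl s t) = size s.
Proof. by move=> h; rewrite /xorl size_map size_zip h minnn. Qed.

Lemma mem_bools (b : bool) : b \in bools.
Proof. by case: b. Qed.

Lemma nbool_inj (a b : bool) : (a : nat) = b -> a = b.
Proof. by case: a; case: b. Qed.

Lemma csplit (u U c K : nat) (ub Ub cb ib ob : bool) :
  (2 * u + ub) + (2 * c + cb) + ib = (2 * U + Ub) + ob * (2 * K) <->
  exists mb : bool, ub + cb + ib = Ub + 2 * mb /\ u + c + mb = U + ob * K.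
Proof.
split.
- exists (2 <= ub + cb + ib).
  by move: H; case: ub; case: Ub; case: cb; case: ib; case: ob => /=; lia.
- by case=> mb []; case: ub; case: Ub; case: cb; case: ib; case: ob; case: mb => /=; lia.
Qed.

Lemma ba_code (x y z : bool) : ba (4 * x + 2 * y + z) = x.
Proof. by case: x; case: y; case: z. Qed.
Lemma bb_code (x y z : bool) : bb (4 * x + 2 * y + z) = y.
Proof. by case: x; case: y; case: z. Qed.
Lemma bc_code (x y z : bool) : bc (4 * x + 2 * y + z) = z.
Proof. by case: x; case: y; case: z. Qed.

Lemma code_lt8 (x y z : bool) : 4 * x + 2 * y + z < 8.
Proof. by case: x; case: y; case: z. Qed.

Lemma code_eta m : m < 8 -> m = 4 * ba m + 2 * bb m + bc m.
Proof. by do 8 (case: m => [|m] //). Qed.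

Lemma FeasW_rcons w s i o : FeasW (rcons w s) i o <->
  exists m, [/\ m < 8, stepb s i m & FeasW w m o].
Proof.
rewrite /FeasW /Feas !map_rcons !size_rcons !size_map expnS.
split.
- move=> [x [y [X [Y [[sx sy sX sY] [e1 e2 e3]]]]]].
  case/lastP: x sx e1 e3 => [|x xb]; first by [].
  case/lastP: y sy e2 => [|y yb]; first by [].
  case/lastP: X sX => [|X Xb]; first by [].
  case/lastP: Y sY => [|Y Yb]; first by [].
  rewrite !size_rcons => /eqP; rewrite eqSS => /eqP sY /eqP; rewrite eqSS => /eqP sX.
  move=> [sy] e2 [sx] e1 e3.
  rewrite !xorl_rcons ?sx ?sy ?sX ?sY // !bv_val_rcons in e1 e2 e3.
  move/csplit: e1 => [m1 [f1 g1]].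
  move/csplit: e2 => [m2 [f2 g2]].
  move/csplit: e3 => [m3 [f3 g3]].
  exists (4 * m1 + 2 * m2 + m3); split; first exact: code_lt8.
  + apply/hasP; exists xb; first exact: mem_bools.
    apply/hasP; exists yb; first exact: mem_bools.
    apply/hasP; exists Xb; first exact: mem_bools.
    apply/hasP; exists Yb; first exact: mem_bools.
    by rewrite ba_code bb_code bc_code f1 f2 f3 !eqxx.
  + exists x, y, X, Y; split; rewrite ?size_map //.
    by rewrite ba_code bb_code bc_code.
- move=> [m [_ hs [x [y [X [Y [[sx sy sX sY] [e1 e2 e3]]]]]]]].
  move/hasP: hs => [xb _ /hasP [yb _ /hasP [Xb _ /hasP [Yb _ /and3P [/eqP f1 /eqP f2 /eqP f3]]]]].
  exists (rcons x xb), (rcons y yb), (rcons X Xb), (rcons Y Yb).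
  rewrite !size_rcons sx sy sX sY; split => //.
  rewrite !xorl_rcons ?sx ?sy ?sX ?sY // !bv_val_rcons.
  split; apply/csplit.
  + by exists (ba m).
  + by exists (bb m).
  + by exists (bc m).
Qed.

Lemma FeasW_nil i o : FeasW [::] i o <-> [/\ ba i = ba o, bb i = bb o & bc i = bc o].
Proof.
split.
- move=> [x [y [X [Y [[sx sy sX sY] [e1 e2 e3]]]]]].
  case: x sx e1 e3 => // _; case: y sy e2 => // _; case: X sX => // _; case: Y sY => // _.
  rewrite /= !muln1 !add0n.
  by move=> e2 e1 e3; split; apply: nbool_inj.
- move=> [h1 h2 h3]; exists [::], [::], [::], [::]; split => //=.
  by rewrite !muln1 !add0n h1 h2 h3.
Qed.


Lemma stepL3_ok s i m : s < 8 -> i < 8 -> m < 8 -> stepL3 s i m = stepb s i m.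
Proof.
move=> hs hi hm; have := stepT_ok.
move/allP/(_ s); rewrite mem_iota hs => /(_ isT).
move/allP/(_ i); rewrite mem_iota hi => /(_ isT).
by move/allP/(_ m); rewrite mem_iota hm => /(_ isT) /eqP.
Qed.

Lemma nth_relstep np v s i o : i < 8 -> o < np ->
  nth false (nth [::] (relstep np v s) i) o =
  has (fun m => stepL3 s i m && nth false (nth [::] v m) o) (iota 0 8).
Proof.
move=> hi ho; rewrite /relstep (nth_map 0) ?size_iota // nth_iota //.
by rewrite (nth_map 0) ?size_iota // nth_iota.
Qed.

Lemma nth_relinit pr np i o : i < 8 -> o < np ->
  nth false (nth [::] (relinit pr np) i) o = (pr i == o).
Proof.
move=> hi ho; rewrite /relinit (nth_map 0) ?size_iota // nth_iota //.
by rewrite (nth_map 0) ?size_iota // nth_iota.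
Qed.

Lemma relvec_ok pr np w i o : all (fun s => s < 8) w -> i < 8 -> o < np ->
  nth false (nth [::] (foldl (relstep np) (relinit pr np) w) i) o <->
  exists o8, [/\ o8 < 8, pr o8 = o & FeasW w i o8].
Proof.
elim/last_ind: w i o => [|w s IH] i o.
- move=> _ hi ho /=; rewrite nth_relinit //; split.
  + by move/eqP=> <-; exists i; split => //; apply/FeasW_nil.
  + move=> [o8 [h8 <- /FeasW_nil [e1 e2 e3]]].
    by rewrite (code_eta hi) (code_eta h8) e1 e2 e3.
- rewrite all_rcons => /andP [hs hw] hi ho.
  rewrite foldl_rcons nth_relstep //; split.
  + move/hasP=> [m]; rewrite mem_iota add0n => /andP [_ hm] /andP [h1 h2].
    move/(IH _ _ hw hm ho): h2 => [o8 [h8 hp hf]].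
    exists o8; split => //; apply/FeasW_rcons; exists m; split => //.
    by rewrite -stepL3_ok.
  + move=> [o8 [h8 hp /FeasW_rcons [m [hm hst hf]]]].
    apply/hasP; exists m; first by rewrite mem_iota.
    rewrite stepL3_ok // hst /=; apply/(IH _ _ hw hm ho).
    by exists o8.
Qed.

Lemma checkDFA_ok (T : eqType) (step : T -> nat -> T) init RT :
  checkDFA step init RT -> forall w, all (fun s => s < 8) w -> foldl step init w \in RT.1.
Proof.
case: RT => R Tr; rewrite /checkDFA => /and4P [hsz /eqP h0 _ /allP hall].
change ((R, Tr).1) with R.
suff H : forall w k, k < size R -> all (fun s => s < 8) w ->
   exists2 k', k' < size R & foldl step (nth init R k) w = nth init R k'.
  move=> w hw; rewrite -{1}h0; have [k' hk' ->] := H w 0 hsz hw.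
  exact: mem_nth.
elim=> [|s w IH] k hk /=; first by exists k.
move=> /andP [hs hw].
have := hall k; rewrite mem_iota add0n hk => /(_ isT) H2.
have := allP H2 s; rewrite mem_iota add0n hs => /(_ isT) /andP [hk2 /eqP ->].
exact: IH.
Qed.


Definition fL (w : seq nat) : LT :=
  (foldl (relstep 4) (relinit (fun o => o %/ 2) 4) w,
   [seq [seq foldl (pstep p) (pinit p) w | p <- Ppats X] | X <- iota 1 7]).
Definition fH (w : seq nat) : HT :=
  (foldl (relstep 2) (relinit (fun o => o %% 2) 2) w,
   [seq foldl (pstep (Mpat X)) (pinit (Mpat X)) w | X <- iota 1 7]).

Lemma zip_mapr (A B : Type) (f : A -> B) (s : seq A) : zip s (map f s) = map (fun x => (x, f x)) s.
Proof. by elim: s => //= x s ->. Qed.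

Lemma fL_foldl w : foldl stepL initL w = fL w.
Proof.
elim/last_ind: w => [|w s IH]; first by [].
by rewrite foldl_rcons IH /stepL /fL /= !foldl_rcons.
Qed.

Lemma fH_foldl w : foldl stepH initH w = fH w.
Proof.
elim/last_ind: w => [|w s IH]; first by [].
by rewrite foldl_rcons IH /stepH /fH /= !foldl_rcons.
Qed.

Lemma comb_ok w w' : all (fun s => s < 8) w -> all (fun s => s < 8) w' ->
  zerob (fL w) (fH w') = rhsb (fL w) (fH w').
Proof.
move=> hw hw'.
have hL := checkDFA_ok RL_ok hw; have hH := checkDFA_ok RH_ok hw'.
rewrite fL_foldl in hL; rewrite fH_foldl in hH.
have := final_ok; rewrite /finalb => /allP /(_ _ hL) /allP /(_ _ hH) /eqP //.
Qed.

Lemma rhsb_ok w w' : rhsb (fL w) (fH w') =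
  has (fun X => matchp (Mpat X) w' && has (fun p => matchp p w) (Ppats X)) (iota 1 7).
Proof.
rewrite /rhsb; apply: eq_in_has => X; rewrite mem_iota => /andP [h1 h2].
have hX : X.-1 < 7 by lia.
have eX : nth 0 (iota 1 7) X.-1 = X by rewrite nth_iota //; lia.
have -> : (fL w).2 = [seq [seq foldl (pstep p) (pinit p) w | p <- Ppats X] | X <- iota 1 7] by [].
have -> : (fH w').2 = [seq foldl (pstep (Mpat X)) (pinit (Mpat X)) w' | X <- iota 1 7] by [].
rewrite (nth_map 0) ?size_iota // (nth_map 0) ?size_iota // eX.
rewrite -matchp_accept; congr (_ && _).
rewrite zip_mapr has_map; apply: eq_has => p /=.
by rewrite -matchp_accept.
Qed.


Lemma eucl_uniq K P Q u v : 0 < K -> u < K -> v < K -> P * K + u = Q * K + v -> P = Q /\ u = v.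
Proof.
move=> hK hu hv e; split.
- by have := congr1 (divn^~ K) e; rewrite !divnMDl // !divn_small // !addn0.
- by have := congr1 (modn^~ K) e; rewrite !modnMDl !modn_small.
Qed.

Lemma eucl_split K P Q u v : 0 < K -> u < 2 * K -> v < K ->
  (P * K + u = Q * K + v <-> exists c : bool, u = v + c * K /\ P + c = Q).
Proof.
move=> hK hu hv; split.
- move=> e; case: (ltnP u K) => hu2.
  + have [-> ->] := eucl_uniq hK hu2 hv e; exists false; rewrite /=; split; lia.
  + have e2 : (P + 1) * K + (u - K) = Q * K + v by rewrite mulnDl mul1n -addnA subnKC.
    have hu3 : u - K < K by lia.
    have [h1 h2] := eucl_uniq hK hu3 hv e2.
    exists true; rewrite /=; split; lia.
- move=> [c [-> <-]]; rewrite mulnDl; case: c => /=; lia.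
Qed.

Lemma add_split K Rr xH xL aH aL XH XL : 0 < K -> 0 < Rr -> xH < Rr -> aH < Rr -> XH < Rr ->
  xL < K -> aL < K -> XL < K ->
  ((xH * K + xL) + (aH * K + aL)) %% (Rr * K) = XH * K + XL <->
  exists cx o1 : bool, xL + aL = XL + cx * K /\ xH + aH + cx = XH + o1 * Rr.
Proof.
move=> hK hR hxH haH hXH hxL haL hXL.
have hlt : XH * K + XL < Rr * K.
  have : XH * K + K <= Rr * K by rewrite -mulSnr leq_mul2r hXH orbT.
  lia.
have eS : (xH * K + xL) + (aH * K + aL) = (xH + aH) * K + (xL + aL) by rewrite mulnDl; lia.
rewrite eS; split.
- move=> e; have := divn_eq ((xH + aH) * K + (xL + aL)) (Rr * K).
  rewrite e; set q := _ %/ _ => e2.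
  have e3 : (xH + aH) * K + (xL + aL) = (q * Rr + XH) * K + XL by rewrite e2 mulnDl mulnA; lia.
  have := (eucl_split (xH + aH) (q * Rr + XH) hK (_ : xL + aL < 2 * K) hXL).1 e3.
  move=> [|cx [h1 h2]]; first by lia.
  have e4 : 0 * Rr + (xH + aH + cx) = q * Rr + XH by rewrite mul0n add0n -h2; lia.
  have := (eucl_split 0 q hR (_ : xH + aH + cx < 2 * Rr) hXH).1 e4.
  move=> [|o1 [g1 g2]]; first by case: (cx); lia.
  by exists cx, o1.
- move=> [cx [o1 [h1 h2]]].
  have -> : (xH + aH) * K + (xL + aL) = o1 * (Rr * K) + (XH * K + XL).
    have e5 : (xH + aH + cx) * K = (XH + o1 * Rr) * K by rewrite h2.
    rewrite !mulnDl in e5; rewrite h1 mulnA; lia.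
  by rewrite modnMDl modn_small.
Qed.


Lemma bv_val_cat s t : bv_val (s ++ t) = bv_val s * 2 ^ size t + bv_val t.
Proof.
elim/last_ind: t => [|t b IH]; first by rewrite cats0 expn0 muln1 addn0.
rewrite -rcons_cat !bv_val_rcons IH size_rcons expnS mulnDr; lia.
Qed.

Lemma bv_val_lt s : bv_val s < 2 ^ size s.
Proof.
elim/last_ind: s => [|s b IH]; first by [].
rewrite bv_val_rcons size_rcons expnS; case: b => /=; lia.
Qed.

Lemma bv_bit s i : i < size s -> nth false s i = odd (bv_val s %/ 2 ^ ((size s).-1 - i)).
Proof.
move=> hi.
rewrite -{2}(cat_take_drop i.+1 s) bv_val_cat.
have hs : size (drop i.+1 s) = (size s).-1 - i by rewrite size_drop; lia.
rewrite hs divnMDl ?expn_gt0 // divn_small; last by rewrite -hs bv_val_lt.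
by rewrite addn0 (take_nth false hi) bv_val_rcons oddD oddM /=; case: (nth false s i).
Qed.

Lemma bv_of_val n (s : seq bool) : size s = n -> tval (bv_of n (bv_val s)) = s.
Proof.
move=> hs; apply: (@eq_from_nth _ false); first by rewrite size_tuple hs.
move=> i; rewrite size_tuple => hi.
rewrite -(tnth_nth false (bv_of n (bv_val s)) (Ordinal hi)) tnth_mktuple /=.
by rewrite bv_bit ?hs.
Qed.

Lemma bv_surj n v : v < 2 ^ n -> exists s : seq bool, size s = n /\ bv_val s = v.
Proof.
elim: n v => [|n IH] v hv.
- by exists [::]; split => //; move: hv; rewrite expn0; case: v.
- have [|s [hs hv2]] := IH v./2; first by rewrite expnS in hv; lia.
  exists (rcons s (odd v)); rewrite size_rcons hs bv_val_rcons hv2; split => //.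
  by rewrite -{3}(odd_double_half v) -muln2 mulnC addnC.
Qed.

Lemma odd_div_mod k n j : j < n -> odd (k %/ 2 ^ j) = odd ((k %% 2 ^ n) %/ 2 ^ j).
Proof.
move=> hj; rewrite {1}(divn_eq k (2 ^ n)).
have -> : 2 ^ n = 2 ^ (n - j) * 2 ^ j by rewrite -expnD subnK // ltnW.
rewrite mulnA divnMDl ?expn_gt0 // oddD oddM oddX /=.
by rewrite subn_eq0 leqNgt hj /= andbF.
Qed.

Lemma bv_of_mod n k : bv_of n k = bv_of n (k %% 2 ^ n).
Proof.
apply: eq_from_tnth => i; rewrite !tnth_mktuple; apply: odd_div_mod.
case: i => i /= hi; lia.
Qed.

Lemma bv_val_bv_of n k : bv_val (bv_of n k) = k %% 2 ^ n.
Proof.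
rewrite bv_of_mod; have [s [hs <-]] := bv_surj (ltn_pmod k (expn_gt0 2 n)).
by rewrite bv_of_val.
Qed.

Lemma bv_val_add n (x y : n.-tuple bool) : bv_val (bv_add x y) = (bv_val x + bv_val y) %% 2 ^ n.
Proof. by rewrite /bv_add bv_val_bv_of modn_mod. Qed.

Lemma tup_inj n (x y : n.-tuple bool) : bv_val x = bv_val y -> x = y.
Proof.
move=> e; apply: val_inj => /=.
by rewrite -(bv_of_val (size_tuple x)) -(bv_of_val (size_tuple y)) e.
Qed.

Lemma tup_of_val n s : size s = n -> tval (tup_of n s) = s.
Proof.
move=> hs; apply: (@eq_from_nth _ false); first by rewrite size_tuple hs.
move=> i; rewrite size_tuple => hi.
by rewrite -(tnth_nth false (tup_of n s) (Ordinal hi)) tnth_mktuple.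
Qed.

Lemma xor_val n (x y : n.-tuple bool) : tval (bv_xor x y) = xorl x y.
Proof.
apply: (@eq_from_nth _ false); first by rewrite size_tuple size_xorl !size_tuple.
move=> i; rewrite size_tuple => hi.
rewrite -(tnth_nth false (bv_xor x y) (Ordinal hi)) tnth_mktuple /xorl.
rewrite (nth_map (false, false)) ?size_zip ?size_tuple ?minnn // nth_zip ?size_tuple //=.
by rewrite !(tnth_nth false).
Qed.

Lemma xorl_cat s1 s2 t1 t2 : size s1 = size t1 -> xorl (s1 ++ s2) (t1 ++ t2) = xorl s1 t1 ++ xorl s2 t2.
Proof. by move=> h; rewrite /xorl zip_cat // map_cat. Qed.

Lemma rot_cat (s t : seq bool) : rot (size s) (s ++ t) = t ++ s.
Proof. by rewrite /rot drop_size_cat // take_size_cat. Qed.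


Lemma ba_bool (e : bool) : ba e = false. Proof. by case: e. Qed.
Lemma bb_bool (e : bool) : bb e = false. Proof. by case: e. Qed.
Lemma bc_bool (e : bool) : bc e = e. Proof. by case: e. Qed.
Lemma ba_code2 (x y : bool) : ba (4 * x + 2 * y) = x. Proof. by case: x; case: y. Qed.
Lemma bb_code2 (x y : bool) : bb (4 * x + 2 * y) = y. Proof. by case: x; case: y. Qed.
Lemma bc_code2 (x y : bool) : bc (4 * x + 2 * y) = false. Proof. by case: x; case: y. Qed.

Lemma ltk s m : size s = m -> bv_val s < 2 ^ m.
Proof. by move=> <-; apply: bv_val_lt. Qed.

Section Sem.
Variables (n r k : nat) (hn : n = r + k).

Lemma tsplit (x : n.-tuple bool) : x = tup_of n (take r x ++ drop r x).
Proof. apply: val_inj => /=; rewrite tup_of_val ?cat_take_drop ?size_tuple //. Qed.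

Lemma size_take_t (x : n.-tuple bool) : size (take r x) = r.
Proof. by rewrite size_takel // size_tuple hn leq_addr. Qed.
Lemma size_drop_t (x : n.-tuple bool) : size (drop r x) = k.
Proof. by rewrite size_drop size_tuple hn addKn. Qed.

Lemma val_tup sH sL : size sH = r -> size sL = k ->
  bv_val (tup_of n (sH ++ sL)) = bv_val sH * 2 ^ k + bv_val sL.
Proof.
move=> h1 h2; rewrite tup_of_val ?size_cat ?h1 ?h2 // bv_val_cat h2 //.
Qed.

Lemma addt xH xL aH aL XH XL : size xH = r -> size xL = k -> size aH = r -> size aL = k ->
  size XH = r -> size XL = k ->
  bv_add (tup_of n (xH ++ xL)) (tup_of n (aH ++ aL)) = tup_of n (XH ++ XL) <->
  exists cx o1 : bool, bv_val xL + bv_val aL = bv_val XL + cx * 2 ^ k /\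
                      bv_val xH + bv_val aH + cx = bv_val XH + o1 * 2 ^ r.
Proof.
move=> s1 s2 s3 s4 s5 s6; rewrite -add_split ?expn_gt0 //; try by apply: ltk.
rewrite -!val_tup // -expnD -hn -bv_val_add; split; first by move=> ->.
by move/tup_inj.
Qed.

Lemma xrt sH sL tH tL : size sH = r -> size sL = k -> size tH = r -> size tL = k ->
  bv_val (XR r (tup_of n (sH ++ sL)) (tup_of n (tH ++ tL))) =
  bv_val (xorl sL tL) * 2 ^ r + bv_val (xorl sH tH).
Proof.
move=> s1 s2 s3 s4.
rewrite /XR /bv_rotl tup_of_val; last by rewrite size_rot size_tuple.
rewrite xor_val !tup_of_val ?size_cat ?s1 ?s2 ?s3 ?s4 // xorl_cat ?s1 ?s3 //.
have hs : size (xorl sH tH) = r by rewrite size_xorl // s1 s3.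
have hs2 : size (xorl sL tL) = k by rewrite size_xorl // s2 s4.
by rewrite -{1}hs rot_cat bv_val_cat hs.
Qed.

Lemma outt sH sL tH tL SH SL TH TL c c' : size sH = r -> size sL = k -> size tH = r -> size tL = k ->
  size SH = r -> size SL = k -> size TH = r -> size TL = k -> size c = k -> size c' = r ->
  XR r (tup_of n (SH ++ SL)) (tup_of n (TH ++ TL)) =
    bv_add (XR r (tup_of n (sH ++ sL)) (tup_of n (tH ++ tL))) (tup_of n (c ++ c')) <->
  exists e o3 : bool, bv_val (xorl sH tH) + bv_val c' = bv_val (xorl SH TH) + e * 2 ^ r /\
     bv_val (xorl sL tL) + bv_val c + e = bv_val (xorl SL TL) + o3 * 2 ^ k.
Proof.
move=> s1 s2 s3 s4 s5 s6 s7 s8 s9 s10.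
have z1 : size (xorl sH tH) = r by rewrite size_xorl // s1 s3.
have z2 : size (xorl sL tL) = k by rewrite size_xorl // s2 s4.
have z3 : size (xorl SH TH) = r by rewrite size_xorl // s5 s7.
have z4 : size (xorl SL TL) = k by rewrite size_xorl // s6 s8.
rewrite -add_split ?expn_gt0 //; try by apply: ltk.
have hG : bv_val (tup_of n (c ++ c')) = bv_val c * 2 ^ r + bv_val c'.
  rewrite tup_of_val; first by rewrite bv_val_cat s10. by rewrite size_cat s9 s10 hn addnC.
rewrite -hG -!xrt // -expnD [k + r]addnC -hn -bv_val_add; split; first by move=> ->.
by move/tup_inj.
Qed.

Lemma sem (a b c a' b' c' : seq bool) : size a = k -> size b = k -> size c = k ->
  size a' = r -> size b' = r -> size c' = r ->
  (exists x y : n.-tuple bool, XR r (bv_add x (tup_of n (a' ++ a))) (bv_add y (tup_of n (b' ++ b)))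
     = bv_add (XR r x y) (tup_of n (c ++ c'))) <->
  exists cx cy e o1 o2 o3 : bool, Feas a b c e (4 * cx + 2 * cy + o3) /\
                                  Feas a' b' c' (4 * cx + 2 * cy) (4 * o1 + 2 * o2 + e).
Proof.
move=> sa sb sc sa' sb' sc'; split.
- move=> [x [y H]].
  have ex := tsplit x; have ey := tsplit y.
  have [p1 p2 p3 p4] : [/\ size (take r x) = r, size (drop r x) = k, size (take r y) = r & size (drop r y) = k].
    by split; rewrite ?size_take_t ?size_drop_t.
  move: H; rewrite ex ey.
  move: p1 p2 p3 p4; set xH := take r x; set xL := drop r x; set yH := take r y; set yL := drop r y.
  move=> p1 p2 p3 p4 H.
  have hX := tsplit (bv_add (tup_of n (xH ++ xL)) (tup_of n (a' ++ a))).
  have hY := tsplit (bv_add (tup_of n (yH ++ yL)) (tup_of n (b' ++ b))).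
  have [q1 q2 q3 q4] : [/\ size (take r (bv_add (tup_of n (xH ++ xL)) (tup_of n (a' ++ a)))) = r,
     size (drop r (bv_add (tup_of n (xH ++ xL)) (tup_of n (a' ++ a)))) = k,
     size (take r (bv_add (tup_of n (yH ++ yL)) (tup_of n (b' ++ b)))) = r &
     size (drop r (bv_add (tup_of n (yH ++ yL)) (tup_of n (b' ++ b)))) = k].
    by split; rewrite ?size_take_t ?size_drop_t.
  move: hX hY q1 q2 q3 q4.
  set XH := take r (bv_add _ (tup_of n (a' ++ a))); set XL := drop r (bv_add _ (tup_of n (a' ++ a))).
  set YH := take r (bv_add _ (tup_of n (b' ++ b))); set YL := drop r (bv_add _ (tup_of n (b' ++ b))).
  move=> hX hY q1 q2 q3 q4; rewrite hX hY in H.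
  move/(addt p1 p2 sa' sa q1 q2): hX => [cx [o1 [g1 g2]]].
  move/(addt p3 p4 sb' sb q3 q4): hY => [cy [o2 [h1 h2]]].
  move/(outt p1 p2 p3 p4 q1 q2 q3 q4 sc sc'): H => [e [o3 [k1 k2]]].
  exists cx, cy, e, o1, o2, o3; split.
  + exists xL, yL, XL, YL; rewrite sa; split => //.
    by rewrite ba_bool bb_bool bc_bool ba_code bb_code bc_code !addn0.
  + exists xH, yH, XH, YH; rewrite sa'; split => //.
    by rewrite ba_code2 bb_code2 bc_code2 ba_code bb_code bc_code addn0.
- move=> [cx [cy [e [o1 [o2 [o3 [[xL [yL [XL [YL [[s1 s2 s3 s4] [e1 e2 e3]]]]]]
          [xH [yH [XH [YH [[t1 t2 t3 t4] [f1 f2 f3]]]]]]]]]]]]].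
  rewrite sa in s1 s2 s3 s4 e1 e2 e3; rewrite sa' in t1 t2 t3 t4 f1 f2 f3.
  rewrite ba_bool bb_bool bc_bool ba_code bb_code bc_code !addn0 in e1 e2 e3.
  rewrite ba_code2 bb_code2 bc_code2 ba_code bb_code bc_code addn0 in f1 f2 f3.
  exists (tup_of n (xH ++ xL)), (tup_of n (yH ++ yL)).
  have -> : bv_add (tup_of n (xH ++ xL)) (tup_of n (a' ++ a)) = tup_of n (XH ++ XL).
    by apply/(addt t1 s1 sa' sa t3 s3); exists cx, o1.
  have -> : bv_add (tup_of n (yH ++ yL)) (tup_of n (b' ++ b)) = tup_of n (YH ++ YL).
    by apply/(addt t2 s2 sb' sb t4 s4); exists cy, o2.
  by apply/(outt t1 s1 t2 s2 t3 s3 t4 s4 sc sc'); exists e, o3.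
Qed.
End Sem.

Lemma omega_lt8 a b c : all (fun s => s < 8) (omega a b c).
Proof. by apply/allP => s /mapP [[[x y] z] _ ->] /=; apply: code_lt8. Qed.

Lemma omega_proj a b c : size a = size b -> size a = size c ->
  [/\ map ba (omega a b c) = a, map bb (omega a b c) = b & map bc (omega a b c) = c].
Proof.
elim: a b c => [|x a IH] [|y b] [|z c] //= [h1] [h2].
by have [-> -> ->] := IH _ _ h1 h2; rewrite ba_code bb_code bc_code.
Qed.

Lemma FeasW_omega a b c i o : size a = size b -> size a = size c ->
  FeasW (omega a b c) i o <-> Feas a b c i o.
Proof. by move=> h1 h2; have [e1 e2 e3] := omega_proj h1 h2; rewrite /FeasW e1 e2 e3. Qed.

Lemma lowentry w (cx cy e : bool) : all (fun s => s < 8) w ->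
  nth false (nth [::] (fL w).1 e) (2 * cx + cy) <-> exists o3 : bool, FeasW w e (4 * cx + 2 * cy + o3).
Proof.
move=> hw; rewrite /fL /= relvec_ok //; last by case: cx; case: cy.
  2: by case: e.
split.
- move=> [o8 [h8 hp hf]]; exists (bc o8).
  have -> : 4 * cx + 2 * cy + bc o8 = o8.
    have := divn_eq o8 2; rewrite modn2 hp /bc; lia.
  exact: hf.
- move=> [o3 hf]; exists (4 * cx + 2 * cy + o3); split => //; first exact: code_lt8.
  by case: (cx); case: (cy); case: (o3).
Qed.

Lemma highentry w (cx cy e : bool) : all (fun s => s < 8) w ->
  nth false (nth [::] (fH w).1 (4 * cx + 2 * cy)) e <->
  exists o1 o2 : bool, FeasW w (4 * cx + 2 * cy) (4 * o1 + 2 * o2 + e).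
Proof.
move=> hw; rewrite /fH /= relvec_ok //; last by case: e.
  2: by case: cx; case: cy.
split.
- move=> [o8 [h8 hp hf]]; exists (ba o8), (bb o8).
  have -> : 4 * ba o8 + 2 * bb o8 + e = o8.
    by rewrite {3}(code_eta h8); congr (_ + _); rewrite -hp modn2.
  exact: hf.
- move=> [o1 [o2 hf]]; exists (4 * o1 + 2 * o2 + e); split => //; first exact: code_lt8.
  by case: (o1); case: (o2); case: (e).
Qed.

Lemma zerob_ok w w' : all (fun s => s < 8) w -> all (fun s => s < 8) w' ->
  zerob (fL w) (fH w') <->
  ~ exists cx cy e o1 o2 o3 : bool, FeasW w e (4 * cx + 2 * cy + o3) /\
                                  FeasW w' (4 * cx + 2 * cy) (4 * o1 + 2 * o2 + e).
Proof.
move=> hw hw'; rewrite /zerob; split.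
- move/negP=> H [cx [cy [e [o1 [o2 [o3 [h1 h2]]]]]]]; apply: H.
  apply/hasP; exists cx; first exact: mem_bools.
  apply/hasP; exists cy; first exact: mem_bools.
  apply/hasP; exists e; first exact: mem_bools.
  apply/andP; split; [apply/lowentry => //; by exists o3 | apply/highentry => //; by exists o1, o2].
- move=> H; apply/negP => /hasP [cx _ /hasP [cy _ /hasP [e _ /andP [h1 h2]]]]; apply: H.
  move/(lowentry _ _ _ hw): h1 => [o3 h1]; move/(highentry _ _ _ hw'): h2 => [o1 [o2 h2]].
  by exists cx, cy, e, o1, o2, o3.
Qed.

Import GRing.Theory Num.Theory.

Lemma adp_zero n r (A B G : n.-tuple bool) :
  adpXR r A B G = 0%R <-> ~ exists x y : n.-tuple bool, XR r (bv_add x A) (bv_add y B) = bv_add (XR r x y) G.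
Proof.
rewrite /adpXR /adp; split.
- move/eqP; rewrite GRing.mulf_eq0 GRing.invr_eq0 !pnatr_eq0 expn_eq0 /= orbF.
  move/eqP/card0_eq => H [x [y e]].
  by have := H (x, y); rewrite !inE /= e eqxx.
- move=> H; apply/eqP; rewrite GRing.mulf_eq0; apply/orP; left.
  rewrite pnatr_eq0; apply/eqP/eq_card0 => [[x y]]; rewrite !inE /=.
  by apply/negP => /eqP e; apply: H; exists x, y.
Qed.

Unset Implicit Arguments.

Theorem theorem9 (n r : nat) (hn : 2 <= n) (hr : 1 <= r <= n - 1)
  (a b c : (n - r).-tuple bool) (a' b' c' : r.-tuple bool) :
  adpXR r (tup_of n (a' ++ a)) (tup_of n (b' ++ b)) (tup_of n (c ++ c')) = 0%R
  <->
  exists X : nat, [/\ 1 <= X <= 7,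
    matchp (Mpat X) (omega a' b' c') &
    has (fun p => matchp p (omega a b c)) (Ppats X)].
Proof.
have hnr : n = r + (n - r) by rewrite subnKC //; lia.
rewrite adp_zero (sem hnr) ?size_tuple //.
have e1 : forall i o, Feas a b c i o <-> FeasW (omega a b c) i o.
  by move=> i o; rewrite FeasW_omega ?size_tuple.
have e2 : forall i o, Feas a' b' c' i o <-> FeasW (omega a' b' c') i o.
  by move=> i o; rewrite FeasW_omega ?size_tuple.
have hw := omega_lt8 a b c; have hw' := omega_lt8 a' b' c'.
have -> : (~ exists cx cy e o1 o2 o3 : bool, Feas a b c e (4 * cx + 2 * cy + o3) /\
            Feas a' b' c' (4 * cx + 2 * cy) (4 * o1 + 2 * o2 + e)) <->
          zerob (fL (omega a b c)) (fH (omega a' b' c')).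
  rewrite zerob_ok //; split => H [cx [cy [e [o1 [o2 [o3 [h1 h2]]]]]]]; apply: H;
  exists cx, cy, e, o1, o2, o3; split; by [apply/e1 | apply/e2].
rewrite comb_ok // rhsb_ok; split.
- move/hasP => [X]; rewrite mem_iota => hX /andP [h1 h2]; exists X; split => //; lia.
- move=> [X [hX h1 h2]]; apply/hasP; exists X; first by rewrite mem_iota; lia.
  by rewrite h1 h2.
Qed.
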